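(* Let $\mathbb{K}=(G,M,I)$ be a finite formal context with concept lattice $\underline{\mathfrak{B}}(\mathbb{K})$ and let $\underline{S}=\{s\}$ be an interval of $\underline{\mathfrak{B}}(\mathbb{K})$ with $|\underline{S}|=1$. Then $\underline{S}$ is quasi-dismantling for $\underline{\mathfrak{B}}(\mathbb{K})$ if and only if one of the following holds: $s$ is doubly irreducible; or $s=\top$ and $s$ is supremum-irreducible; or $s=\bot$ and $s$ is infimum-irreducible; or $s=\top=\bot$.
   Context: For $u\le v$ in a lattice $L$, $[u,v]=\{x\mid u\le x\le v\}$, $(v]=\{x\mid x\le v\}$, $[u)=\{x\mid u\le x\}$. An interval $[u,v]$ of $L$ is quasi-dismantling for $L$ if $u$ is supremum-prime in $(v]$ (for all $x,y\in(v]$, $u\le x\vee y$ implies $u\le x$ or $u\le y$) and $v$ is infimum-prime in $[u)$ (for all $x,y\in[u)$, $x\wedge y\le v$ implies $x\le v$ or $y\le v$). An element of a finite lattice is supremum-irreducible if it has exactly one lower neighbor, infimum-irreducible if it has exactly one upper neighbor, doubly irreducible if both. $\top,\bot$ denote the greatest and least elements of $\underline{\mathfrak{B}}(\mathbb{K})$. The concept lattice is the set of formal concepts $(A,B)$ ($A'=B$, $B'=A$) ordered by inclusion of extents. *)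

(* Defs.v *)
From mathcomp Require Import all_boot.
Set Implicit Arguments. Unset Strict Implicit. Unset Printing Implicit Defensive.

Section Concepts.
Variables (G M : finType) (I : G -> M -> bool).

Definition intent (A : {set G}) : {set M} := [set m | [forall g in A, I g m]].
Definition extent (B : {set M}) : {set G} := [set g | [forall m in B, I g m]].

Definition is_concept (p : {set G} * {set M}) : bool :=
  (intent p.1 == p.2) && (extent p.2 == p.1).

Definition concept := {p : {set G} * {set M} | is_concept p}.

Lemma extent_intentA (A : {set G}) : A \subset extent (intent A).
Proof.
apply/subsetP=> g gA; rewrite inE; apply/forallP=> m; apply/implyP.
by rewrite inE => /forallP/(_ g)/implyP; apply.
Qed.

Lemma intent_extentB (B : {set M}) : B \subset intent (extent B).
Proof.
apply/subsetP=> m mB; rewrite inE; apply/forallP=> g; apply/implyP.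
by rewrite inE => /forallP/(_ m)/implyP; apply.
Qed.

Lemma intent_anti (A1 A2 : {set G}) : A1 \subset A2 -> intent A2 \subset intent A1.
Proof.
move=> /subsetP sA; apply/subsetP=> m; rewrite !inE => /forallP H.
apply/forallP=> g; apply/implyP=> gA; exact: (implyP (H g) (sA g gA)).
Qed.

Lemma closure_is_concept (A : {set G}) :
  is_concept (extent (intent A), intent A).
Proof.
rewrite /is_concept /= eqxx andbT eqEsubset intent_extentB andbT.
exact: intent_anti (extent_intentA A).
Qed.

Definition closure (A : {set G}) : concept :=
  exist _ (extent (intent A), intent A) (closure_is_concept A).

Definition cle (c d : concept) : bool := (val c).1 \subset (val d).1.
Definition clt (c d : concept) : bool := (c != d) && cle c d.

Definition cmeet (c d : concept) : concept := closure ((val c).1 :&: (val d).1).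
Definition cjoin (c d : concept) : concept := closure ((val c).1 :|: (val d).1).

Definition is_top (s : concept) : Prop := forall c, cle c s.
Definition is_bot (s : concept) : Prop := forall c, cle s c.

Definition cinterval (u v : concept) : {set concept} :=
  [set x | cle u x && cle x v].

Definition sup_prime_below (u v : concept) : Prop :=
  forall x y, cle x v -> cle y v -> cle u (cjoin x y) -> cle u x \/ cle u y.
Definition inf_prime_above (u v : concept) : Prop :=
  forall x y, cle u x -> cle u y -> cle (cmeet x y) v -> cle x v \/ cle y v.
Definition quasi_dismantling (u v : concept) : Prop :=
  sup_prime_below u v /\ inf_prime_above u v.

Definition lower_cover (y x : concept) : bool :=
  clt y x && ~~ [exists z, clt y z && clt z x].
Definition sup_irreducible (x : concept) : Prop :=
  #|[set y | lower_cover y x]| = 1.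
Definition inf_irreducible (x : concept) : Prop :=
  #|[set y | lower_cover x y]| = 1.
Definition doubly_irreducible (x : concept) : Prop :=
  sup_irreducible x /\ inf_irreducible x.

End Concepts.

(* Main.v *)
Require Import Defs.
From mathcomp Require Import all_boot.
Set Implicit Arguments. Unset Strict Implicit. Unset Printing Implicit Defensive.

Section GenS.
Variables (T : finType) (le : rel T).
Hypotheses (le_refl : forall x, le x x)
  (le_trans : forall y x z, le x y -> le y z -> le x z)
  (le_anti : forall x y, le x y -> le y x -> x = y).
Definition glt x y := (x != y) && le x y.
Definition glc y x := glt y x && ~~ [exists z, glt y z && glt z x].

Lemma cover_above s z : glt z s -> exists c, glc c s && le z c.
Proof.
move=> zs.
have Pz : glt z s && le z z by rewrite zs le_refl.
case: (@arg_maxnP T z (fun w => glt w s && le z w) (fun w => #|[set t | le t w]|) Pz) => c /andP[cs zc] Hmax.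
exists c; rewrite zc andbT /glc cs /=.
apply/negP=> /existsP[t /andP[ct ts]].
have := Hmax t; rewrite ts /=.
case/andP: (ct) => ct1 ct2.
rewrite (le_trans zc ct2) => /(_ isT).
apply/negP; rewrite -ltnNge; apply: proper_card.
rewrite properE; apply/andP; split.
  by apply/subsetP=> w; rewrite !inE => /le_trans; apply.
apply/subsetPn; exists t; first by rewrite inE le_refl.
rewrite inE; apply/negP=> tc; move: ct1; by rewrite (le_anti ct2 tc) eqxx.
Qed.

Variable j : T -> T -> T.
Hypotheses (jl : forall x y, le x (j x y)) (jr : forall x y, le y (j x y))
  (jlub : forall x y z, le x z -> le y z -> le (j x y) z).
Variable m : T -> T -> T.
Hypotheses (ml : forall x y, le (m x y) x) (mr : forall x y, le (m x y) y).

Lemma supP s :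
  (forall x y, le x s -> le y s -> le s (j x y) -> le s x \/ le s y)
  <-> #|[set y | glc y s]| <= 1.
Proof.
split=> [H|H].
  apply/card_le1_eqP=> a b; rewrite !inE => /andP[/andP[a1 a2] an] /andP[/andP[b1 b2] bn].
  case: (boolP (b == a)) => [/eqP -> //|nba].
  have jas : le (j a b) s by apply: jlub.
  have ja : j a b = s.
    apply/eqP; apply/negPn/negP=> ne.
    case: (boolP (a == j a b)) => [/eqP ea|nea].
      exfalso; move/negP: bn; apply; apply/existsP; exists a.
      by rewrite /glt nba a1 a2 ea jr.
    exfalso; move/negP: an; apply; apply/existsP; exists (j a b).
    by rewrite /glt nea jl ne jas.
  case: (H a b a2 b2); first by rewrite ja le_refl. move=> sa.
    by move: a1; rewrite (le_anti a2 sa) eqxx.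
  move=> sb; by move: b1; rewrite (le_anti b2 sb) eqxx.
move=> x y xs ys sj.
case: (boolP (le s x)) => [|nsx]; first by left.
case: (boolP (le s y)) => [|nsy]; first by right.
exfalso.
have ltx : glt x s by rewrite /glt xs andbT; apply/eqP=> e; move: nsx; rewrite e le_refl.
have lty : glt y s by rewrite /glt ys andbT; apply/eqP=> e; move: nsy; rewrite e le_refl.
case: (cover_above ltx) => c /andP[cc xc].
case: (cover_above lty) => d /andP[dd yd].
have cd : c = d by move/card_le1_eqP: H; apply; rewrite inE.
subst d.
have := le_trans sj (jlub xc yd) => sc.
case/andP: cc => /andP[c1 c2] _.
by move: c1; rewrite (le_anti c2 sc) eqxx.
Qed.

Lemma botP s : (forall c, le s c) <-> #|[set y | glc y s]| = 0.
Proof.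
split=> [H|H].
  apply/eqP; rewrite cards_eq0; apply/eqP/setP=> y; rewrite !inE.
  apply/negP=> /andP[/andP[y1 y2] _].
  by move: y1; rewrite (le_anti y2 (H y)) eqxx.
move=> c; apply/negPn/negP=> nsc.
have lt : glt (m s c) s.
  rewrite /glt ml andbT; apply/eqP=> e; move: nsc; rewrite -e.
  by rewrite mr.
case: (cover_above lt) => d /andP[dd _].
have : d \in [set y | glc y s] by rewrite inE.
by move/eqP: H; rewrite cards_eq0 => /eqP ->; rewrite inE.
Qed.
End GenS.

Section Conc.
Variables (G M : finType) (I : G -> M -> bool).

Lemma extent_anti (B1 B2 : {set M}) : B1 \subset B2 -> extent I B2 \subset extent I B1.
Proof.
move=> /subsetP sB; apply/subsetP=> g; rewrite !inE => /forallP H.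
apply/forallP=> m; apply/implyP=> mB; exact: (implyP (H m) (sB m mB)).
Qed.

Lemma clo_mono (A B : {set G}) : A \subset B ->
  extent I (intent I A) \subset extent I (intent I B).
Proof. by move=> h; apply/extent_anti/intent_anti. Qed.

Lemma conc_closed (c : concept I) : extent I (intent I (val c).1) = (val c).1.
Proof. by case: c => [[A B]] /= /andP[/eqP -> /eqP ->]. Qed.

Lemma cle_refl (c : concept I) : cle c c.
Proof. exact: subxx. Qed.

Lemma cle_trans (b a c : concept I) : cle a b -> cle b c -> cle a c.
Proof. exact: subset_trans. Qed.

Lemma cle_anti (c d : concept I) : cle c d -> cle d c -> c = d.
Proof.
move=> h1 h2; apply: val_inj.
move: h1 h2; case: c => [[A B] hc]; case: d => [[A' B'] hd].
rewrite /cle /= => h1 h2.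
case/andP: hc => /eqP /= hA _; case/andP: hd => /eqP /= hA' _.
have eA : A = A' by apply/eqP; rewrite eqEsubset h1 h2.
by subst A'; rewrite -hA -hA'.
Qed.

Lemma cjoin_l (x y : concept I) : cle x (cjoin x y).
Proof. rewrite /cle /=; exact: (subset_trans (subsetUl _ _) (extent_intentA I _)). Qed.
Lemma cjoin_r (x y : concept I) : cle y (cjoin x y).
Proof. rewrite /cle /=; exact: (subset_trans (subsetUr _ _) (extent_intentA I _)). Qed.
Lemma cjoin_lub (x y z : concept I) : cle x z -> cle y z -> cle (cjoin x y) z.
Proof.
rewrite /cle /= => h1 h2; rewrite -(conc_closed z); apply: clo_mono.
by rewrite subUset h1 h2.
Qed.
Lemma cmeet_l (x y : concept I) : cle (cmeet x y) x.
Proof. rewrite /cle /= -{2}(conc_closed x); apply: clo_mono; exact: subsetIl. Qed.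
Lemma cmeet_r (x y : concept I) : cle (cmeet x y) y.
Proof. rewrite /cle /= -{2}(conc_closed y); apply: clo_mono; exact: subsetIr. Qed.
Lemma cmeet_glb (x y z : concept I) : cle z x -> cle z y -> cle z (cmeet x y).
Proof.
rewrite /cle /= => h1 h2; apply: (subset_trans _ (extent_intentA I _)).
by rewrite subsetI h1 h2.
Qed.

Definition dle (x y : concept I) := cle y x.

Lemma upperE s : [set y | lower_cover s y] = [set y | glc dle y s].
Proof.
apply: eq_finset => y. rewrite /lower_cover /glc /glt /clt /dle eq_sym.
congr (_ && ~~ _); apply: eq_existsb => z.
by rewrite andbC eq_sym [z == s]eq_sym.
Qed.
Lemma lowerE s : [set y | lower_cover y s] = [set y | glc (@cle _ _ I) y s].
Proof. by []. Qed.
End Conc.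

Lemma final_step (A B Top Bot : Prop) (L U : nat) :
  (A <-> L <= 1) -> (B <-> U <= 1) -> (Bot <-> L = 0) -> (Top <-> U = 0) ->
  (A /\ B <-> (L = 1 /\ U = 1) \/ (Top /\ L = 1) \/ (Bot /\ U = 1) \/ (Top /\ Bot)).
Proof.
move=> [a1 a2] [b1 b2] [c1 c2] [d1 d2]; split.
  case=> /a1 hA /b1 hB; clear a1 a2 b1 b2 c1 d1.
  move: hA hB c2 d2; case: L => [|[|L]] // _; case: U => [|[|U]] // _; intuition.
move=> H; split; [apply: a2|apply: b2];
  case: H => [[e1 e2]|[[/d1 e2 e1]|[[/c1 e1 e2]|[/d1 e2 /c1 e1]]]]; by rewrite ?e1 ?e2.
Qed.

Theorem proposition3 (G M : finType) (I : G -> M -> bool)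
    (u v s : concept I) :
  cle u v -> cinterval u v = [set s] ->
  quasi_dismantling u v <->
    (doubly_irreducible s
     \/ (is_top s /\ sup_irreducible s)
     \/ (is_bot s /\ inf_irreducible s)
     \/ (is_top s /\ is_bot s)).
Proof.
move=> uv hint.
have hs : s \in cinterval u v by rewrite hint set11.
have hu : u \in cinterval u v by rewrite inE cle_refl uv.
have hv : v \in cinterval u v by rewrite inE cle_refl uv.
rewrite hint !inE in hu hv; move/eqP: hu => ->; move/eqP: hv => ->.
have SP := supP (@cle_refl _ _ I) (@cle_trans _ _ I) (@cle_anti _ _ I)
  (@cjoin_l _ _ I) (@cjoin_r _ _ I) (@cjoin_lub _ _ I) s.
have IP := supP (T := concept I) (le := @dle _ _ I) (@cle_refl _ _ I)
  (fun y x z h1 h2 => @cle_trans _ _ I y z x h2 h1)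
  (fun x y h1 h2 => @cle_anti _ _ I x y h2 h1)
  (@cmeet_l _ _ I) (@cmeet_r _ _ I) (fun x y z => @cmeet_glb _ _ I x y z) s.
have BP := botP (@cle_refl _ _ I) (@cle_trans _ _ I) (@cle_anti _ _ I)
  (@cmeet_l _ _ I) (@cmeet_r _ _ I) s.
have TP := botP (T := concept I) (le := @dle _ _ I) (@cle_refl _ _ I)
  (fun y x z h1 h2 => @cle_trans _ _ I y z x h2 h1)
  (fun x y h1 h2 => @cle_anti _ _ I x y h2 h1)
  (@cjoin_l _ _ I) (@cjoin_r _ _ I) s.
rewrite -upperE in IP TP.
apply: (final_step SP IP BP TP).
Qed.
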